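(* For every $d\ge0$, $\mathbf S_d\,\mathbf F_d\,\mathbf S_d^{-1}=\mathbf H_d$.
   Context: All matrices here have rows and columns indexed by $-1,0,\dots,d$. For integers $i,d\ge -1$ define $f_{-1,-1}=1$, $f_{-1,d}=0$ for $d\ge0$, $f_{i,-1}=0$ for $i\ge0$, and $f_{i,d}=(i+1)!\,S(d+1,i+1)$ for $i,d\ge0$, where $S(\cdot,\cdot)$ is the Stirling number of the second kind; $\mathbf F_d=(f_{i,j})_{-1\le i,j\le d}$. The shift matrix is $\mathbf S_d=\left((-1)^{d+1+i+j}\binom{d-j}{i+1}\right)_{-1\le i,j\le d}$. For $m\ge1$ and a permutation $\sigma$ of $[m]=\{1,\dots,m\}$, $\mathrm{des}(\sigma)$ is the number of $1\le t\le m-1$ with $\sigma(t)>\sigma(t+1)$; $A(m,i,j)$ is the number of permutations $\sigma$ of $[m]$ with $\mathrm{des}(\sigma)=i$ and $\sigma(1)=j$ (and $A(m,i,j)=0$ if $i<0$). Define $h^{(d)}_{i,j}=A(d+2,i+1,j+2)$ and $\mathbf H_d=(h^{(d)}_{i,j})_{-1\le i,j\le d}$. *)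

(* Defs.v *)
(* Matrices indexed by -1..d are represented as
   'M[rat]_(d.+2); the ordinal k : 'I_(d.+2) stands for the index k-1. *)
From HB Require Import structures.
From mathcomp Require Import all_boot all_order all_algebra all_fingroup.
Set Implicit Arguments. Unset Strict Implicit. Unset Printing Implicit Defensive.
Import Order.TTheory GRing.Theory Num.Theory.

Fixpoint stirling2 (n k : nat) : nat :=
  match n, k with
  | 0, 0 => 1
  | 0, _.+1 => 0
  | _.+1, 0 => 0
  | n'.+1, k'.+1 => k'.+1 * stirling2 n' k'.+1 + stirling2 n' k'
  end.

(* f_{i,d} for i,d >= -1, with arguments shifted by one: fnum (i+1) (d+1). *)
Definition fnum (a b : nat) : nat :=
  match a, b with
  | 0, 0 => 1
  | 0, _.+1 => 0
  | _.+1, 0 => 0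
  | _, _ => a`! * stirling2 b a
  end.

(* des(sigma) for sigma a permutation of [m] (encoded on 'I_m, value v <-> v+1) *)
Definition des (m : nat) (s : {perm 'I_m}) : nat :=
  #|[set t : 'I_m | [exists u : 'I_m, (val u == (val t).+1) && (val (s u) < val (s t))]]|.

Definition Aeul (m i j : nat) : nat :=
  #|[set s : {perm 'I_m} | (des s == i) &&
       [exists t : 'I_m, (val t == 0) && ((val (s t)).+1 == j)]]|.

Local Open Scope ring_scope.

Definition Fmx (d : nat) : 'M[rat]_(d.+2) :=
  \matrix_(k, l) (fnum k l)%:R.

(* S_d = ((-1)^{d+1+i+j} binom(d-j, i+1)), with i = k-1, j = l-1 *)
Definition Smx (d : nat) : 'M[rat]_(d.+2) :=
  \matrix_(k, l) ((-1) ^+ (d.+1 + k + l) * ('C(d.+1 - l, k))%:R).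

(* H_d = (A(d+2, i+1, j+2)), with i = k-1, j = l-1 *)
Definition Hmx (d : nat) : 'M[rat]_(d.+2) :=
  \matrix_(k, l) (Aeul d.+2 k l.+1)%:R.

(* Main.v *)
Require Import Defs.
From HB Require Import structures.
From mathcomp Require Import all_boot all_order all_algebra all_fingroup.
From mathcomp Require Import zify ring.
Set Implicit Arguments. Unset Strict Implicit. Unset Printing Implicit Defensive.
Import Order.TTheory GRing.Theory Num.Theory.

Arguments stirling2 : simpl never.
Lemma stSS a b : stirling2 a.+1 b.+1 = b.+1 * stirling2 a b.+1 + stirling2 a b. Proof. by []. Qed.
Lemma st0S b : stirling2 0 b.+1 = 0. Proof. by []. Qed.

Lemma st_small a b : a < b -> stirling2 a b = 0.
Proof.
elim: a b => [|a IH] [|b] // H.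
by rewrite stSS !IH ?muln0 // ltnW.
Qed.

Lemma st_diag a : stirling2 a a = 1.
Proof. by elim: a => // a IH; rewrite stSS IH st_small ?muln0. Qed.

Lemma stS0 a : stirling2 a.+1 0 = 0. Proof. by []. Qed.

Lemma st_block M r :
  \sum_(m < M.+1) 'C(M, m) * stirling2 (M - m) r = stirling2 M.+1 r.+1.
Proof.
elim: M r => [|M IH] r.
  by rewrite big_ord1 subn0 bin0 mul1n stSS st0S muln0.
rewrite big_ord_recl subn0 bin0 mul1n.
have E : \sum_(i < M.+1) 'C(M.+1, bump 0 i) * stirling2 (M.+1 - bump 0 i) r
   = \sum_(i < M.+1) 'C(M, i.+1) * stirling2 (M - i) r + \sum_(i < M.+1) 'C(M, i) * stirling2 (M - i) r.
  rewrite -big_split /=; apply: eq_bigr => i _.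
  by rewrite /bump /= add1n binS subSS mulnDl.
rewrite E IH addnA.
have E2 : stirling2 M.+1 r + \sum_(i < M.+1) 'C(M, i.+1) * stirling2 (M - i) r
   = \sum_(i < M.+1) 'C(M, i) * stirling2 (M.+1 - i) r.
  rewrite [RHS]big_ord_recl subn0 bin0 mul1n; congr (_ + _).
  rewrite big_ord_recr /= bin_small // mul0n addn0; apply: eq_bigr => i _.
  by rewrite /bump /= add1n subSS.
rewrite E2; clear E E2.
case: r => [|r].
  rewrite big1 ?add0n; last by move=> i _; rewrite subSn ?leq_ord // stS0 muln0.
  by rewrite [RHS]stSS mul1n stS0 addn0.
have E3 : \sum_(i < M.+1) 'C(M, i) * stirling2 (M.+1 - i) r.+1
  = r.+1 * \sum_(i < M.+1) 'C(M, i) * stirling2 (M - i) r.+1 + \sum_(i < M.+1) 'C(M, i) * stirling2 (M - i) r.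
  rewrite big_distrr -big_split; apply: eq_bigr => i _.
  rewrite subSn ?leq_ord // stSS /=; nia.
rewrite E3 !IH.
change (stirling2 M.+2 r.+2) with (r.+2 * stirling2 M.+1 r.+2 + stirling2 M.+1 r.+1).
nia.
Qed.

Definition dpred m (s : {perm 'I_m}) (t : 'I_m) : bool :=
  [exists u : 'I_m, (val u == (val t).+1) && (val (s u) < val (s t))].

Lemma desE m (s : {perm 'I_m}) : des s = \sum_(t < m) dpred s t.
Proof.
rewrite /des cardsE -sum1_card big_mkcond /=; apply: eq_bigr => t _.
by rewrite unfold_in /dpred; case: [exists _, _].
Qed.

Lemma dpred_lift0 n (s : 'S_n.+1) (j : 'I_n.+2) :
  dpred (lift_perm ord0 j s) ord0 = (s ord0 < j).
Proof.
apply/existsP/idP.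
  case=> u /andP [/eqP Hu].
  case: (unliftP ord0 u) Hu => [u'|] -> //= Hu.
  have -> : u' = ord0 by apply: val_inj; move: Hu; rewrite /= /bump /=; lia.
  by rewrite lift_perm_lift lift_perm_id /= /bump; case: ltnP => H; lia.
move=> H; exists (lift ord0 ord0); apply/andP; split; first by [].
rewrite lift_perm_lift lift_perm_id /= /bump; move: H; case: ltnP => H2 /=; lia.
Qed.

Lemma bump_lt h a b : (bump h a < bump h b) = (a < b).
Proof. by rewrite /bump; case: leqP; case: leqP; lia. Qed.

Lemma dpred_liftS n (s : 'S_n.+1) (j : 'I_n.+2) (t : 'I_n.+1) :
  dpred (lift_perm ord0 j s) (lift ord0 t) = dpred s t.
Proof.
apply/existsP/existsP.
  case=> u /andP [/eqP Hu Hlt].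
  case: (unliftP ord0 u) Hu Hlt => [u'|] -> //=.
  rewrite !lift_perm_lift /= bump_lt /bump !leq0n !add1n => Hu Hlt.
  by exists u'; rewrite Hlt andbT; apply/eqP; case: Hu.
case=> u /andP [/eqP Hu Hlt]; exists (lift ord0 u).
rewrite !lift_perm_lift /= bump_lt Hlt andbT /bump !leq0n !add1n Hu.
by [].
Qed.

Lemma des_lift n (s : 'S_n.+1) (j : 'I_n.+2) :
  des (lift_perm ord0 j s) = des s + (s ord0 < j).
Proof.
rewrite !desE big_ord_recl dpred_lift0 addnC; congr (_ + _).
by apply: eq_bigr => t _; rewrite dpred_liftS.
Qed.

Lemma des_le m (s : {perm 'I_m.+1}) : des s <= m.
Proof.
rewrite desE big_ord_recr /=.
have -> : dpred s ord_max = false.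
  by apply/existsP => -[u /andP [/eqP Hu _]]; have := ltn_ord u; rewrite Hu /=; lia.
rewrite addn0 -[X in _ <= X]card_ord -sum1_card.
by apply: leq_sum => i _; case: (dpred _ _).
Qed.

Lemma Aeul_card m i j :
  Aeul m.+1 i j.+1 = \sum_(s : 'S_m.+1 | s ord0 == j :> nat) (des s == i).
Proof.
rewrite /Aeul cardsE -sum1_card big_mkcond [RHS]big_mkcond /=.
apply: eq_bigr => s _; rewrite unfold_in.
have -> : [exists t : 'I_m.+1, (val t == 0) && ((val (s t)).+1 == j.+1)] = (s ord0 == j :> nat).
  apply/existsP/idP.
    case=> t /andP [/eqP Ht]; have -> : t = ord0 by apply: val_inj.
    by [].
  by move=> H; exists ord0; rewrite eqxx /= eqSS.
by case: (des s == i); case: (_ == _).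
Qed.

Lemma Aeul_card' m i (j : 'I_m.+1) :
  Aeul m.+1 i j.+1 = \sum_(s : 'S_m.+1 | s ord0 == j) (des s == i).
Proof. by rewrite Aeul_card; apply: eq_bigl => s; rewrite val_eqE. Qed.

Lemma sum_lift n (F : 'S_n.+2 -> nat) (j : 'I_n.+2) :
  \sum_(s : 'S_n.+2 | s ord0 == j) F s = \sum_(s : 'S_n.+1) F (lift_perm ord0 j s).
Proof.
rewrite (reindex (lift_perm ord0 j)); last first.
  pose ulsf i (s : 'S_n.+2) k := odflt k (unlift (s i) (s (lift i k))).
  have ulsfK i (s : 'S_n.+2) k: lift (s i) (ulsf i s k) = s (lift i k).
    rewrite /ulsf; have:= neq_lift i k.
    by rewrite -(can_eq (permK s)) => /unlift_some[] ? ? ->.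
  have inj_ulsf: injective (ulsf ord0 _).
    move=> s; apply: can_inj (ulsf (s ord0) s^-1%g) _ => k'.
    by rewrite {1}/ulsf ulsfK !permK liftK.
  exists (fun s => perm (inj_ulsf s)) => [s _ | s].
    by apply/permP=> k'; rewrite permE /ulsf lift_perm_lift lift_perm_id liftK.
  move/(s _ =P _) => si0; apply/permP=> k.
  case: (unliftP ord0 k) => [k'|] ->; rewrite ?lift_perm_id //.
  by rewrite lift_perm_lift -si0 permE ulsfK.
by apply: eq_bigl => s; rewrite lift_perm_id eqxx.
Qed.

Lemma Aeul_rec n i j : j <= n.+1 ->
  Aeul n.+2 i j.+1 = \sum_(j' < n.+1)
     (if j' < j then (if i is i'.+1 then Aeul n.+1 i' j'.+1 else 0)
      else Aeul n.+1 i j'.+1).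
Proof.
move=> Hj; rewrite Aeul_card.
have -> : \sum_(s : 'S_n.+2 | s ord0 == j :> nat) (des s == i)
        = \sum_(s : 'S_n.+2 | s ord0 == inord j) (des s == i).
  by apply: eq_bigl => s; rewrite -val_eqE /= inordK.
rewrite sum_lift.
under eq_bigr => s _ do rewrite des_lift inordK //.
rewrite (partition_big (fun s : 'S_n.+1 => s ord0) xpredT) //=.
apply: eq_bigr => j' _.
under eq_bigr => s /eqP -> do [].
case: (j' < j); last by rewrite Aeul_card'; apply: eq_bigr => s _; rewrite addn0.
case: i => [|i]; last by rewrite Aeul_card'; apply: eq_bigr => s _; rewrite addn1 eqSS.
by rewrite big1 // => s _; rewrite addn1.
Qed.

Definition Tf N r j := \sum_(m < N.+1) 'C(j, m) * stirling2 (N - m) r.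

Lemma hockey j m : \sum_(j' < j) 'C(j', m) = 'C(j, m.+1).
Proof. by elim: j => [|j IH]; rewrite ?big_ord0 // big_ord_recr /= IH binS addnC. Qed.

Lemma T_hockey N r j : \sum_(j' < j) Tf N r j' + stirling2 N.+1 r = Tf N.+1 r j.
Proof.
rewrite /Tf exchange_big /= [RHS]big_ord_recl subn0 bin0 mul1n addnC; congr (_ + _).
apply: eq_bigr => m _; rewrite -big_distrl /= hockey.
by rewrite /bump /= add1n subSS.
Qed.

Lemma T_full N r : \sum_(j' < N.+1) Tf N r j' = r.+1 * stirling2 N.+1 r.+1.
Proof.
apply/eqP; rewrite -(eqn_add2r (stirling2 N.+1 r)) T_hockey /Tf st_block stSS.
by [].
Qed.

Lemma T_diag N j : Tf N N j = 1.
Proof.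
rewrite /Tf big_ord_recl subn0 bin0 mul1n st_diag big1 // => m _.
rewrite st_small ?muln0 //= /bump; have := ltn_ord m; lia.
Qed.

Lemma Aeul_top n j : Aeul n.+1 n.+1 j.+1 = 0.
Proof.
rewrite Aeul_card big1 // => s _.
by have := des_le s; case: eqP => // ->; rewrite ltnn.
Qed.

Definition Gf n k j := \sum_(m < n) 'C(m, k) * Aeul n m j.+1.

Lemma G_rec n k j : j <= n.+1 ->
  Gf n.+2 k j = \sum_(j' < n.+1) Gf n.+1 k j'
     + \sum_(j' < j) (if k is k'.+1 then Gf n.+1 k' j' else 0).
Proof.
move=> Hj.
rewrite (big_ord_widen n.+1 (fun j' => if k is k'.+1 then Gf n.+1 k' j' else 0) Hj).
rewrite [X in _ + X]big_mkcond /= -big_split /= {1}/Gf.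
rewrite (eq_bigr (fun i : 'I_n.+2 => \sum_(j' < n.+1) 'C(i, k) * (if j' < j then (if (i : nat) is i'.+1 then Aeul n.+1 i' j'.+1 else 0) else Aeul n.+1 i j'.+1))); last by move=> i _; rewrite Aeul_rec // big_distrr.
rewrite exchange_big /=.
apply: eq_bigr => j' _.
case: ltnP => Hjj.
  rewrite big_ord_recl /= muln0 add0n.
  case: k => [|k].
    rewrite addn0; apply: eq_bigr => i _; by rewrite !bin0.
  rewrite -big_split /=; apply: eq_bigr => i _.
  by rewrite /bump /= add1n binS mulnDl.
rewrite addn0 big_ord_recr /= Aeul_top muln0 addn0.
by [].
Qed.

Lemma Aeul_1 : Aeul 1 0 1 = 1.
Proof.
rewrite Aeul_card.
transitivity (\sum_(s : 'S_1) 1).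
  apply: eq_big => s.
    by rewrite (ord1 (s ord0)).
  by move=> _; have := des_le s; rewrite leqn0 => ->.
by rewrite sum1_card card_Sn.
Qed.

Lemma G_closed N : forall k j, k <= N -> j <= N ->
  Gf N.+1 k j = (N - k)`! * Tf N (N - k) j.
Proof.
elim: N => [|n IH] k j.
  rewrite !leqn0 => /eqP -> /eqP ->.
  by rewrite /Gf big_ord1 bin0 mul1n Aeul_1 /Tf big_ord1 bin0.
move=> Hk Hj; rewrite G_rec //.
case: k Hk => [|k] Hk.
  rewrite [X in _ + X]big1 ?addn0 // subn0.
  rewrite (eq_bigr (fun _ => n`!)); last first.
    by move=> j' _; rewrite IH ?subn0 ?T_diag ?muln1 // -ltnS.
  by rewrite sum_nat_const card_ord T_diag muln1 factS.
have Hkn : k <= n by [].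
rewrite subSS.
rewrite (eq_bigr (fun j' : 'I_j => (n - k)`! * Tf n (n - k) j')); last first.
  by move=> j' _; rewrite IH //; have := ltn_ord j'; lia.
rewrite -big_distrr -T_hockey mulnDr addnC; congr (_ + _).
case: (ltnP k n) => Hkn'.
  rewrite (eq_bigr (fun j' : 'I_n.+1 => (n - k.+1)`! * Tf n (n - k.+1) j')); last first.
    by move=> j' _; rewrite IH // -ltnS.
  rewrite -big_distrr T_full.
  have -> : (n - k.+1).+1 = n - k by lia.
  have -> : n - k = (n - k.+1).+1 by lia.
  by rewrite /= factS; nia.
have -> : k = n by apply/eqP; rewrite eqn_leq Hkn Hkn'.
rewrite subnn stS0 muln0 big1 // => j' _.
rewrite /Gf big1 // => i _.
by rewrite bin_small ?mul0n // ltnS.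
Qed.

Local Open Scope ring_scope.

Lemma lift0E n (i : 'I_n) : nat_of_ord (lift ord0 i) = i.+1. Proof. by []. Qed.

Definition bf (l k : nat) : rat :=
  \sum_(m < l.+1) (-1) ^+ (k + m) * ('C(m, k))%:R * ('C(l, m))%:R.

Lemma bf_step l k : bf l.+1 k = bf l k +
  \sum_(m < l.+1) (-1) ^+ (k + m.+1) * ('C(m.+1, k))%:R * ('C(l, m))%:R.
Proof.
rewrite /bf big_ord_recl [in RHS]big_ord_recl !bin0 -addrA; congr (_ + _).
rewrite (eq_bigr (fun i : 'I_l.+1 => (-1) ^+ (k + i.+1) * ('C(i.+1, k))%:R * ('C(l, i.+1))%:R
   + (-1) ^+ (k + i.+1) * ('C(i.+1, k))%:R * ('C(l, i))%:R)); last first.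
  by move=> i _; rewrite lift0E binS natrD mulrDr.
rewrite big_split /=; congr (_ + _).
rewrite big_ord_recr (bin_small (ltnSn l)) mulr0n mulr0 /= addr0; apply: eq_bigr => i _.
by [].
Qed.

Lemma bfE l k : bf l k = (l == k)%:R.
Proof.
elim: l k => [|l IH] k.
  rewrite /bf big_ord1 bin0 addn0; case: k => [|k]; rewrite bin0n /=.
    by rewrite expr0 !mul1r.
  by rewrite mulr0 mul0r.
rewrite bf_step.
case: k => [|k].
  rewrite (eq_bigr (fun i : 'I_l.+1 => - ((-1) ^+ (0 + i) * ('C(i, 0))%:R * ('C(l, i))%:R))); last first.
    by move=> i _; rewrite !bin0 add0n exprS !mulN1r !mulNr.
  rewrite sumrN -/(bf l 0) subrr.
  by [].
rewrite (eq_bigr (fun i : 'I_l.+1 => (-1) ^+ (k + i) * ('C(i, k))%:R * ('C(l, i))%:R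
     - ((-1) ^+ (k.+1 + i) * ('C(i, k.+1))%:R * ('C(l, i))%:R))); last first.
  move=> i _; rewrite binS natrD mulrDr mulrDl addrC; congr (_ + _).
    by rewrite addSn addnS !exprS !mulN1r opprK.
  by rewrite addnS exprS mulN1r !mulNr.
rewrite sumrB -/(bf l k.+1) -/(bf l k) addrC subrK IH.
by [].
Qed.

Section M.
Variable d : nat.
Local Notation n := d.+2.

Definition Pm : 'M[rat]_n := \matrix_(k, l) ('C(l, k))%:R.
Definition Bm : 'M[rat]_n := \matrix_(k, l) ((-1) ^+ (k + l) * ('C(l, k))%:R).
Definition Jm : 'M[rat]_n := \matrix_(k, l) (rev_ord k == l)%:R.

Lemma mulJ (M : 'M[rat]_n) k l : (Jm *m M) k l = M (rev_ord k) l.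
Proof.
rewrite !mxE (bigD1 (rev_ord k)) //= !mxE eqxx mul1r big1 ?addr0 // => i Hi.
by rewrite !mxE eq_sym (negbTE Hi) mul0r.
Qed.

Lemma mulmxJ (M : 'M[rat]_n) k l : (M *m Jm) k l = M k (rev_ord l).
Proof.
rewrite !mxE (bigD1 (rev_ord l)) //= !mxE rev_ordK eqxx mulr1 big1 ?addr0 // => i Hi.
rewrite !mxE; case: eqP => [E|]; last by rewrite mulr0.
by move: Hi; rewrite -E rev_ordK eqxx.
Qed.

Lemma JJ : Jm *m Jm = 1%:M.
Proof.
apply/matrixP => k l; rewrite mulJ !mxE rev_ordK.
by [].
Qed.

Lemma BP : Bm *m Pm = 1%:M.
Proof.
apply/matrixP => k l; rewrite !mxE.
have Hl := ltn_ord l.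
rewrite eq_sym -val_eqE /= -(bfE l k) /bf.
rewrite (big_ord_widen n (fun m => (-1) ^+ (k + m) * ('C(m, k))%:R * ('C(l, m))%:R) Hl).
rewrite [RHS]big_mkcond /=; apply: eq_bigr => m _; rewrite !mxE -mulrA.
case: ltnP => H //.
by rewrite (bin_small H) mulr0n !mulr0.
Qed.

Lemma SBJ : Smx d = Bm *m Jm.
Proof.
apply/matrixP => k l; rewrite mulmxJ !mxE /=.
have Hl := ltn_ord l.
have -> : (d.+1 + k + l = (k + (d.+2 - l.+1)) + l.*2)%N by lia.
by rewrite exprD -mul2n exprM sqrrN !expr1n mulr1 subSS.
Qed.

End M.

Lemma fnumE a b : fnum a b = (a`! * stirling2 b a)%N.
Proof. by case: a => [|a]; case: b => [|b] //; rewrite ?st0S ?stS0 ?muln0. Qed.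

Lemma PH d : Pm d *m Hmx d = Jm d *m Fmx d *m (Jm d *m Pm d).
Proof.
apply/matrixP => k l.
rewrite -mulmxA mulJ !mxE.
have Hk : (k <= d.+1)%N by rewrite -ltnS.
have Hl : (l <= d.+1)%N by rewrite -ltnS.
have HG := G_closed Hk Hl.
transitivity ((Gf d.+2 k l)%:R : rat).
  rewrite /Gf natr_sum; apply: eq_bigr => m _; rewrite !mxE natrM.
  by [].
rewrite HG /Tf natrM natr_sum big_distrr /=.
rewrite (reindex_inj rev_ord_inj) /=; apply: eq_bigr => m _.
have Hm : (m <= d.+1)%N by rewrite -ltnS.
rewrite mulJ !mxE fnumE !natrM /= !subSS subKn //; ring.
Qed.



Theorem lemma2p5 (d : nat) :
  Smx d \in unitmx /\ Smx d *m Fmx d *m invmx (Smx d) = Hmx d.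
Proof.
have SX : Smx d *m (Jm d *m Pm d) = 1%:M.
  by rewrite SBJ -mulmxA (mulmxA (Jm d)) JJ mul1mx BP.
have [U _] := mulmx1_unit SX.
split => //.
have -> : invmx (Smx d) = Jm d *m Pm d.
  by rewrite -[RHS]mul1mx -(mulVmx U) -mulmxA SX mulmx1.
rewrite SBJ -!mulmxA.
have := PH d; rewrite -!mulmxA => <-.
by rewrite mulmxA BP mul1mx.
Qed.
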